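(* Let $k,r\in\mathbb N$, let $A\subseteq\Lambda_k^r$, $x\in\Lambda_k^r$ and $t>0$. If $(A^{-1}A)\cap U_t(x)=\varnothing$, then $|A|/|\Lambda_k^r|\le\exp(-t^2/4r)$.
   Context: $\Lambda_k=\{\lambda\in\mathbb C:\lambda^k=1\}$ is the multiplicative group of $k$-th roots of unity, and $\Lambda_k^r$ is its $r$-th Cartesian power with coordinatewise multiplication. For $A\subseteq\Lambda_k^r$, $A^{-1}A=\{a^{-1}b:a,b\in A\}$. Let $d_0$ be one half of Euclidean distance on $\Lambda_k$, and for $x,y\in\Lambda_k^r$ let $d(x,y)=\sum_{j=1}^r d_0(x_j,y_j)$. The Hamming ball is $U_t(x)=\{y\in\Lambda_k^r:d(x,y)\le t\}$. *)

(* Defs.v *)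
From HB Require Import structures.
From mathcomp Require Import all_boot all_order all_algebra.
From mathcomp Require Import complex.
From mathcomp Require Import reals.
From mathcomp.analysis Require Import sequences exp trigo.
Set Implicit Arguments. Unset Strict Implicit. Unset Printing Implicit Defensive.
Import Order.TTheory GRing.Theory Num.Theory.
Local Open Scope ring_scope.
Local Open Scope complex_scope.

(* Lambda_k = { omega_k ^ j : j < k } with omega_k = exp(2 pi i / k).
   A point of Lambda_k^r is encoded by its exponent vector
   e : {ffun 'I_r -> 'I_k}; its actual value in C^r is [pt e]. *)
Definition omega (R : realType) (k : nat) : R[i] :=
  (cos (2 * pi / k%:R)) +i* (sin (2 * pi / k%:R)).

Definition pt (R : realType) (k r : nat) (e : {ffun 'I_r -> 'I_k}) : 'I_r -> R[i] :=
  fun j => omega R k ^+ (e j).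

Definition d0 (R : realType) (z w : R[i]) : R := ComplexField.Normc.normc (z - w) / 2.

Definition dist (R : realType) (r : nat) (x y : 'I_r -> R[i]) : R :=
  \sum_(j < r) d0 (x j) (y j).

Definition inU (R : realType) (r : nat) (t : R) (x y : 'I_r -> R[i]) : Prop :=
  dist x y <= t.

Definition in_quot (R : realType) (k r : nat) (A : {set {ffun 'I_r -> 'I_k}})
  (y : 'I_r -> R[i]) : Prop :=
  exists a b, [/\ a \in A, b \in A & forall j, y j = (pt R a j)^-1 * pt R b j].

Arguments omega R k : clear implicits.
Arguments pt R {k r} e j.
Arguments in_quot {R k r} A y.

(* Main.v *)
Require Import Defs.
From HB Require Import structures.
From mathcomp Require Import all_boot all_order all_algebra.
From mathcomp Require Import complex.
From mathcomp Require Import reals.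
From mathcomp.analysis Require Import sequences exp trigo.
From mathcomp Require Import ring lra.
Import Order.TTheory GRing.Theory Num.Theory.
Local Open Scope ring_scope.

Lemma oned (R : realType) (I : finType) (g h : I -> R) (p : R) :
  1 <= p -> (forall i, 0 <= g i <= 1) -> (forall i, 0 <= h i <= p) ->
  (forall i, g i * h i <= 1) ->
  (\sum_i g i) * (\sum_i h i) <= #|I|%:R ^+ 2 * ((1 + p) ^+ 2 / (4 * p)).
Proof.
move=> p1 hg hh hgh.
have hb i : h i <= 1 + p - p * g i.
  have /andP[g0 g1] := hg i; have /andP[h0 hp] := hh i; have := hgh i.
  case: (lerP (p * g i) 1) => pg.
    move=> _; nra.
  move=> gh; have gpos : 0 < g i by nra.
  have : g i * h i <= g i * (1 + p - p * g i) by nra.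
  by rewrite ler_pM2l.
have G0 : 0 <= \sum_i g i by apply: sumr_ge0 => i _; have /andP[] := hg i.
have Hs : \sum_i h i <= #|I|%:R * (1 + p) - p * \sum_i g i.
  apply: (le_trans (ler_sum _ (fun i _ => hb i))).
  rewrite big_split /= sumrN sumr_const -mulr_sumr.
  by rewrite mulr_natl.
set G := \sum_i g i; set H := \sum_i h i; set n := #|I|%:R.
have p0 : 0 < p by lra.
rewrite mulrA ler_pdivlMr; last by lra.
have : G * H <= G * (n * (1 + p) - p * G) by rewrite ler_wpM2l.
move=> h1.
have : 0 <= (n * (1 + p) - 2 * p * G) ^+ 2 by apply: sqr_ge0.
nra.
Qed.

Definition Pc (R : realType) (lam : R) (T : finType) (D : T -> T -> R) (c : R) : Prop :=
  forall (A : {set T}) (f : T -> R), A != set0 ->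
    (forall x a, a \in A -> f x <= D x a) ->
    #|A|%:R * \sum_x expR (lam * f x) <= #|T|%:R ^+ 2 * c.
Arguments Pc {R} lam {T} D c.

Lemma Pc_transport (R : realType) (lam : R) (T T' : finType) (D : T -> T -> R)
  (D' : T' -> T' -> R) (c : R) (phi : T' -> T) :
  bijective phi -> (forall x y, D' x y = D (phi x) (phi y)) ->
  Pc lam D c -> Pc lam D' c.
Proof.
case=> psi K1 K2 hD P A' f' A0 dom.
have injphi : injective phi by apply: can_inj K1.
have := P (phi @: A') (fun x => f' (psi x)).
rewrite card_imset //.
have -> : #|T'| = #|T|.
  by rewrite -(card_imset predT injphi); apply: eq_card => x; rewrite inE;
     apply/imsetP; exists (psi x); rewrite ?inE ?K2.
have -> : \sum_x expR (lam * f' x) = \sum_x expR (lam * f' (psi x)).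
  rewrite (reindex phi); last by exists psi => x _; [apply: K1 | apply: K2].
  by apply: eq_bigr => x _; rewrite K1.
apply.
  apply/set0Pn; have /set0Pn[a aA] := A0; exists (phi a); exact: imset_f.
move=> x a /imsetP[a' a'A ->]; have := dom (psi x) a' a'A.
by rewrite hD K2.
Qed.

Lemma sum_pair (R : realType) (T1 T2 : finType) (F : T1 * T2 -> R) :
  \sum_p F p = \sum_w \sum_y F (y, w).
Proof. by rewrite exchange_big pair_big /=; apply: eq_big => // -[]. Qed.

Lemma Pc_step (R : realType) (lam : R) (T : finType) (k : nat) (D : T -> T -> R)
  (rho : 'I_k -> 'I_k -> R) (c : R) :
  0 <= lam -> 0 < c -> (forall i, rho i i = 0) -> (forall i j, rho i j <= 1) ->
  Pc lam D c ->
  Pc lam (fun x y : T * 'I_k => D x.1 y.1 + rho x.2 y.2)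
     (c * ((1 + expR lam) ^+ 2 / (4 * expR lam))).
Proof.
move=> lam0 c0 rho0 rho1 P A f A0 dom.
set B := [set y | [exists w, (y, w) \in A]].
pose Aw w := [set y | (y, w) \in A].
have [[y0 w0] yA] := set0Pn _ A0.
have B0 : B != set0 by apply/set0Pn; exists y0; rewrite inE; apply/existsP; exists w0.
have T0 : (0 < #|T|)%N by apply/card_gt0P; exists y0.
set M := #|T|%:R ^+ 2 * c.
have M0 : 0 < M by rewrite /M mulr_gt0 // exprn_gt0 // ltr0n.
pose S w := \sum_y expR (lam * f (y, w)).
have S0 w : 0 <= S w by apply: sumr_ge0 => y _; apply: expR_ge0.
have h1 w : #|Aw w|%:R * S w <= M.
  have [->|Aw0] := eqVneq (Aw w) set0; first by rewrite cards0 mul0r ltW.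
  apply: P => // x a; rewrite inE => aA.
  by have := dom (x, w) (a, w) aA; rewrite /= rho0 addr0.
have h2 w : #|B|%:R * S w <= expR lam * M.
  have := P B (fun y => f (y, w) - 1) B0.
  have -> : \sum_x expR (lam * (f (x, w) - 1)) = S w * expR (- lam).
    rewrite /S mulr_suml; apply: eq_bigr => y _.
    by rewrite -expRD; congr expR; ring.
  move=> H; have {}H : #|B|%:R * (S w * expR (- lam)) <= M.
    apply: H => x b; rewrite inE => /existsP[w' bA].
    have := dom (x, w) (b, w') bA; rewrite /=; have := rho1 w w'; lra.
  rewrite mulrA expRN in H.
  by rewrite -ler_pdivrMl ?expR_gt0 // mulrC.
have cardA : #|A|%:R = \sum_w #|Aw w|%:R :> R.
  rewrite -sum1_card natr_sum big_mkcond sum_pair; apply: eq_bigr => w _.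
  rewrite -sum1_card natr_sum [RHS]big_mkcond; apply: eq_bigr => y _.
  by rewrite inE; case: ((y, w) \in A).
have sumS : \sum_x expR (lam * f x) = \sum_w S w by rewrite sum_pair.
have sub w : (#|Aw w| <= #|B|)%N.
  apply: subset_leq_card; apply/subsetP => y; rewrite !inE => h.
  by apply/existsP; exists w.
set b := (#|B|%:R : R).
have b0 : 0 < b :> R by rewrite /b ltr0n card_gt0.
have p1 : 1 <= expR lam by have := expR_ge1Dx lam; lra.
have hh : forall w, 0 <= b * S w / M <= expR lam.
  move=> w; apply/andP; split.
    by apply: divr_ge0; [apply: mulr_ge0; [exact: ltW | exact: S0] | exact: ltW].
  rewrite (@ler_pdivrMr R M (expR lam) (b * S w) M0).
  exact: h2.
have := @oned R _ (fun w => #|Aw w|%:R / b) (fun w => b * S w / M) (expR lam) p1.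
have e1 : \sum_w (#|Aw w|%:R / b) = (\sum_w #|Aw w|%:R) / b by rewrite -mulr_suml.
have e2 : \sum_w (b * S w / M) = b * (\sum_w S w) / M by rewrite -mulr_suml -mulr_sumr.
rewrite e1 e2 card_ord => H.
have {H} H : (\sum_w #|Aw w|%:R) / b * (b * (\sum_w S w) / M)
     <= k%:R ^+ 2 * ((1 + expR lam) ^+ 2 / (4 * expR lam)).
  apply: H => w.
  - rewrite divr_ge0 ?ler0n ?(ltW b0) //= ler_pdivrMr // mul1r ler_nat; exact: sub.
  - exact: hh w.
  - have -> : #|Aw w|%:R / b * (b * S w / M) = #|Aw w|%:R * S w / M.
      by field; apply/andP; split; apply: lt0r_neq0.
    by rewrite ler_pdivrMr // mul1r.
rewrite cardA sumS card_prod natrM.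
have -> : (\sum_w #|Aw w|%:R) * (\sum_w S w) =
   M * ((\sum_w #|Aw w|%:R) / b * (b * (\sum_w S w) / M)).
  by field; apply/andP; split; apply: lt0r_neq0.
have EE : (#|T|%:R * k%:R) ^+ 2 * (c * ((1 + expR lam) ^+ 2 / (4 * expR lam)))
   = M * (k%:R ^+ 2 * ((1 + expR lam) ^+ 2 / (4 * expR lam))) by rewrite /M; ring.
rewrite card_ord EE; apply: ler_wpM2l => //; exact: ltW.
Qed.

Lemma Pc_ffun (R : realType) (lam : R) (k : nat) (rho : 'I_k -> 'I_k -> R) :
  0 <= lam -> (forall i, rho i i = 0) -> (forall i j, rho i j <= 1) ->
  forall n, Pc lam (fun x y : {ffun 'I_n -> 'I_k} => \sum_j rho (x j) (y j))
    (((1 + expR lam) ^+ 2 / (4 * expR lam)) ^+ n).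
Proof.
move=> lam0 rho0 rho1.
have K0 : 0 < (1 + expR lam) ^+ 2 / (4 * expR lam).
  apply: divr_gt0; last by apply: mulr_gt0 => //; apply: expR_gt0.
  by apply: exprn_gt0; have := expR_gt0 lam; lra.
elim=> [|n IH].
  move=> A f A0 dom; rewrite expr0 mulr1 expr2.
  have [a aA] := set0Pn _ A0.
  have fx x : f x <= 0 by have := dom x a aA; rewrite big_ord0.
  apply: ler_pM; [exact: ler0n | by apply: sumr_ge0 => x _; apply: expR_ge0 | | ].
    by rewrite ler_nat; apply: max_card.
  rewrite -sum1_card natr_sum; apply: ler_sum => x _.
  by rewrite expR_le1; apply: mulr_ge0_le0.
rewrite exprSr.
pose phi (x : {ffun 'I_n.+1 -> 'I_k}) := ([ffun j => x (lift ord0 j)], x ord0).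
pose psi (p : {ffun 'I_n -> 'I_k} * 'I_k) : {ffun 'I_n.+1 -> 'I_k} :=
  [ffun i => if unlift ord0 i is Some j then p.1 j else p.2].
refine (@Pc_transport R lam ({ffun 'I_n -> 'I_k} * 'I_k)%type {ffun 'I_n.+1 -> 'I_k}
   (fun x y : {ffun 'I_n -> 'I_k} * 'I_k =>
      (\sum_j rho (x.1 j) (y.1 j)) + rho x.2 y.2)
   (fun x y : {ffun 'I_n.+1 -> 'I_k} => \sum_j rho (x j) (y j))
   (((1 + expR lam) ^+ 2 / (4 * expR lam)) ^+ n * ((1 + expR lam) ^+ 2 / (4 * expR lam)))
   phi _ _ _).
- exists psi.
    move=> x; apply/ffunP => i; rewrite ffunE.
    by case: unliftP => [j ->|->] /=; rewrite ?ffunE.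
  move=> [y w]; rewrite /phi /=; congr pair; last by rewrite ffunE unlift_none.
  by apply/ffunP => j; rewrite !ffunE liftK.
- move=> x y; rewrite big_ord_recl /= addrC; congr (_ + _).
  by apply: eq_bigr => j _; rewrite !ffunE.
- exact: (@Pc_step R lam _ k (fun x y : {ffun 'I_n -> 'I_k} => \sum_j rho (x j) (y j)) rho _ lam0 (exprn_gt0 _ K0) rho0 rho1 IH).
Qed.

Lemma Kbound (R : realType) (lam : R) : 0 <= lam <= 1 ->
  (1 + expR lam) ^+ 2 / (4 * expR lam) <= expR (lam ^+ 2 / 2).
Proof.
move=> /andP[l0 l1].
set z := lam / 4.
have z0 : 0 <= z by rewrite /z; lra.
have z1 : z <= 1/4 by rewrite /z; lra.
set a := expR z.
have a1 : 1 <= a by have := expR_ge1Dx z; rewrite /a; lra.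
have az : a * (1 - z) <= 1.
  have := expR_ge1Dx (- z); rewrite expRN -/a => h.
  have a0 : 0 < a by lra.
  by have := ler_wpM2l (ltW a0) h; rewrite mulfV ?lt0r_neq0.
have el : expR lam = a ^+ 4 by rewrite /a -expRM_natl /z; congr expR; field.
have eq : lam ^+ 2 / 2 = 8 * z ^+ 2 by rewrite /z; field.
rewrite el eq.
set u := a ^+ 2.
have u4 : a ^+ 4 = u ^+ 2 by rewrite /u -exprM.
rewrite u4.
have u1 : 1 <= u by rewrite /u; nra.
set m := (1 - z) ^+ 2.
have um : u * m <= 1.
  have : 0 <= a * (1 - z) by nra.
  rewrite /u /m -exprMn; move=> h.
  by rewrite expr_le1 //.
have m0 : 0 < m by rewrite /m; nra.
have m1 : m <= 1 by rewrite /m; nra.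
have hm : 1 - m ^+ 2 <= 5 * z * m.
  rewrite /m; have : 0 <= z * (1 - 4 * z + z ^+ 2 + z ^+ 3) by nra.
  move=> h; nra.
have q1 : m * u ^+ 2 <= (1 + m) * u - 1 by nra.
have q2 : m * (u ^+ 2 - 1 - 5 * z * u) <= 0.
  have : (1 + m - 5 * z * m) * u <= (1 + m - 5 * z * m) / m.
    rewrite ler_pdivlMr //.
    have : 0 <= 1 + m - 5 * z * m by nra.
    nra.
  have q4 : (1 + m - 5 * z * m) / m <= 1 + m.
    rewrite ler_pdivrMr //; nra.
  move=> q3; nra.
have q5 : u ^+ 2 - 1 <= 5 * z * u.
  have : u ^+ 2 - 1 - 5 * z * u <= 0.
    by rewrite -(pmulr_rle0 _ m0).
  lra.
have q6 : (1 + u ^+ 2) ^+ 2 <= 4 * u ^+ 2 * (1 + 8 * z ^+ 2).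
  have : 0 <= u ^+ 2 - 1 by nra.
  nra.
have := expR_ge1Dx (8 * z ^+ 2) => hE.
rewrite ler_pdivrMr; last by nra.
nra.
Qed.

Section CX.
Local Open Scope complex_scope.

Local Notation nc := ComplexField.Normc.normc.

Lemma omegaX (R : realType) (k n : nat) :
  omega R k ^+ n = cos (n%:R * (2 * pi / k%:R)) +i* sin (n%:R * (2 * pi / k%:R)).
Proof.
elim: n => [|n IH]; first by rewrite expr0 mul0r cos0 sin0.
rewrite exprS IH /omega.
set th := 2 * pi / k%:R.
have -> : n.+1%:R * th = th + n%:R * th by rewrite -addn1 natrD; ring.
rewrite cosD sinD; apply/eqP; rewrite eq_complex /= eqxx /=; apply/eqP; ring.
Qed.

Lemma nc_ge0 (R : realType) (z : R[i]) : 0 <= nc z.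
Proof. by case: z => a b; rewrite /= sqrtr_ge0. Qed.

Lemma nc_omega (R : realType) (k n : nat) : nc (omega R k ^+ n) = 1.
Proof.
rewrite omegaX /= cos2Dsin2.
 by rewrite sqrtr1.
Qed.

Lemma omegak (R : realType) (k : nat) : (0 < k)%N -> omega R k ^+ k = 1.
Proof.
move=> hk; rewrite omegaX.
have -> : k%:R * (2 * pi / k%:R) = pi *+ 2 :> R.
  by rewrite mulr2n; field; rewrite pnatr_eq0 -lt0n.
by rewrite cos2pi sin2pi.
Qed.

Lemma omega_mod (R : realType) (k i j : nat) : (0 < k)%N ->
  omega R k ^+ ((i + j) %% k) = omega R k ^+ i * omega R k ^+ j.
Proof.
move=> hk; rewrite -exprD {2}(divn_eq (i + j) k) exprD mulnC exprM omegak //.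
by rewrite expr1n mul1r.
Qed.

Lemma omega_neq0 (R : realType) (k n : nat) : omega R k ^+ n != 0.
Proof.
apply/negP => /eqP h; have := nc_omega R k n; rewrite h ComplexField.Normc.normc0.
by move=> /eqP; rewrite eq_sym oner_eq0.
Qed.

Lemma d0_le1 (R : realType) (u v : R[i]) : nc u = 1 -> nc v = 1 -> d0 u v <= 1.
Proof.
move=> hu hv; rewrite /d0 ler_pdivrMr // mul1r.
apply: le_trans (le_normcD u (- v)) _.
by rewrite normcN hu hv.
Qed.

Lemma d0_ge0 (R : realType) (u v : R[i]) : 0 <= d0 u v.
Proof. by rewrite /d0 divr_ge0 // nc_ge0. Qed.

Lemma d0_self (R : realType) (u : R[i]) : d0 u u = 0.
Proof. by rewrite /d0 subrr ComplexField.Normc.normc0 mul0r. Qed.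

Lemma d0_transl (R : realType) (k : nat) (a b x : nat) : (0 < k)%N ->
  d0 (omega R k ^+ x) ((omega R k ^+ a)^-1 * omega R k ^+ b)
  = d0 (omega R k ^+ ((a + x) %% k)) (omega R k ^+ b).
Proof.
move=> hk; rewrite /d0 omega_mod //; congr (_ / _).
have -> : omega R k ^+ x - (omega R k ^+ a)^-1 * omega R k ^+ b =
   (omega R k ^+ a)^-1 * (omega R k ^+ a * omega R k ^+ x - omega R k ^+ b).
  by field; apply: omega_neq0.
by rewrite ComplexField.Normc.normcM ComplexField.Normc.normcV nc_omega invr1 mul1r.
Qed.

End CX.

Local Notation nc := ComplexField.Normc.normc.

Theorem lemma6p2 (R : realType) (k r : nat) (hk : (0 < k)%N)
  (A : {set {ffun 'I_r -> 'I_k}}) (x : {ffun 'I_r -> 'I_k}) (t : R) (ht : 0 < t) :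
  (forall y : 'I_r -> R[i], ~ (in_quot A y /\ inU t (pt R x) y)) ->
  (#|A|%:R / #|{ffun 'I_r -> 'I_k}|%:R : R) <= expR (- (t ^+ 2) / (4 * r%:R)).
Proof.
move=> H.
have [->|A0] := eqVneq A set0; first by rewrite cards0 mul0r expR_ge0.
have [a0 a0A] := set0Pn _ A0.
pose rho (i j : 'I_k) := d0 (omega R k ^+ i) (omega R k ^+ j).
pose D (u v : {ffun 'I_r -> 'I_k}) := \sum_j rho (u j) (v j).
have rho0 i : rho i i = 0 by rewrite /rho d0_self.
have rho1 i j : rho i j <= 1 by rewrite /rho d0_le1 // nc_omega.
have D0 u v : 0 <= D u v by apply: sumr_ge0 => j _; apply: d0_ge0.
have tr : t < r%:R.
  have H1 : ~ inU t (pt R x) (fun _ => 1).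
    move=> h; apply: (H (fun _ => 1)); split=> //.
    by exists a0, a0; split=> // j; rewrite mulVf // omega_neq0.
  have : dist (pt R x) (fun _ => 1) <= r%:R.
    rewrite /dist; apply: le_trans (_ : \sum_(j < r) (1 : R) <= _).
      apply: ler_sum => j _; apply: d0_le1; first exact: nc_omega.
      exact: ComplexField.Normc.normc1.
    by rewrite sumr_const card_ord.
  move: H1; rewrite /inU => H1 h2.
  by rewrite ltNge; apply/negP => h3; apply: H1; apply: le_trans h2 h3.
have r0 : 0 < r%:R :> R by apply: lt_trans tr.
pose tau (a : {ffun 'I_r -> 'I_k}) : {ffun 'I_r -> 'I_k} :=
  [ffun j => Ordinal (ltn_pmod (a j + x j) hk)].
have tau_inj : injective tau.
  move=> a b E; apply/ffunP => j.
  have := congr1 (fun f : {ffun 'I_r -> 'I_k} => val (f j)) E; rewrite /= !ffunE /=.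
  move/eqP; rewrite eqn_modDr !modn_small // => /eqP h; exact: val_inj.
have sep a b : a \in A -> b \in A -> t < D (tau a) b.
  move=> aA bA.
  have H1 : ~ inU t (pt R x) (fun j => (pt R a j)^-1 * pt R b j).
    by move=> h; apply: (H (fun j => (pt R a j)^-1 * pt R b j)); split=> //; exists a, b.
  have E : dist (pt R x) (fun j => (pt R a j)^-1 * pt R b j) = D (tau a) b.
    rewrite /dist /D; apply: eq_bigr => j _; rewrite /pt d0_transl // /rho ffunE //.
  by rewrite ltNge -E; apply/negP.
set lam := t / r%:R.
have lam0 : 0 <= lam by rewrite /lam divr_ge0 // ltW.
have lam1 : lam <= 1 by rewrite /lam ler_pdivrMr // mul1r ltW.
have PC := @Pc_ffun R lam k rho lam0 rho0 rho1 r.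
set K := (1 + expR lam) ^+ 2 / (4 * expR lam).
set B := tau @: A.
have := PC A (fun y => if y \in B then t else 0) A0.
set N := (#|{ffun 'I_r -> 'I_k}|%:R : R).
have N0 : 0 < N by rewrite /N ltr0n; apply/card_gt0P; exists a0.
move=> HP.
have {HP} HP : #|A|%:R * \sum_y expR (lam * (if y \in B then t else 0)) <= N ^+ 2 * K ^+ r.
  apply: HP => y a aA.
  case: ifP => [/imsetP[a' a'A ->]|_]; [exact: ltW (sep _ _ a'A aA) | exact: D0].
have low : #|A|%:R * expR (lam * t) <= \sum_y expR (lam * (if y \in B then t else 0)).
  rewrite (bigID (fun y => y \in B)) /=.
  apply: le_trans (_ : \sum_(y | y \in B) expR (lam * (if y \in B then t else 0)) <= _).
    rewrite (eq_bigr (fun _ => expR (lam * t))); last by move=> y ->.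
    by rewrite sumr_const card_imset // mulr_natl.
  by rewrite lerDl; apply: sumr_ge0 => y _; apply: expR_ge0.
have KB : K ^+ r <= expR (lam ^+ 2 / 2 * r%:R).
  rewrite expRM_natr; apply: lerXn2r.
  - by rewrite nnegrE /K divr_ge0 // ?sqr_ge0 // mulr_ge0 // expR_ge0.
  - by rewrite nnegrE expR_ge0.
  by apply: Kbound; rewrite lam0 lam1.
have main : #|A|%:R ^+ 2 * expR (lam * t) <= N ^+ 2 * expR (lam ^+ 2 / 2 * r%:R).
  apply: le_trans (_ : #|A|%:R * \sum_y expR (lam * (if y \in B then t else 0)) <= _).
    by rewrite expr2 -mulrA ler_wpM2l.
  apply: le_trans HP _; apply: ler_wpM2l => //; exact: sqr_ge0.
rewrite -(ler_sqr (x := _ / _)); last 2 first.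
- by rewrite nnegrE divr_ge0 // ltW.
- by rewrite nnegrE expR_ge0.
rewrite -expRM_natl expr_div_n.
have -> : 2%:R * (- t ^+ 2 / (4 * r%:R)) = lam ^+ 2 / 2 * r%:R - lam * t.
  by rewrite /lam; field; rewrite lt0r_neq0.
rewrite expRB ler_pdivrMr ?exprn_gt0 // mulrAC ler_pdivlMr ?expR_gt0 //.
by rewrite [X in _ <= X]mulrC.
Qed.
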